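(* In the nonperishable, zero-lead-time, stationary-demand setting described in the context, let $\mathcal F$ be a hypothesis class satisfying the stated conditions (uniformly bounded, closed under pointwise convergence, and closed under the fix-and-shift transformation), and let $\mathcal F'$ be the associated constrained class. Then $$\inf_{f\in\mathcal F'}\big[\mathcal R(f)-\mathcal R(g^* )\big]=\inf_{f\in\mathcal F}\big[\mathcal R(f)-\mathcal R(g^* )\big] \quad\text{and}\quad \sup_{f\in\mathcal F'}\big|\mathcal R(f)-\hat{\mathcal R}_n(f)\big|\le\sup_{f\in\mathcal F}\big|\mathcal R(f)-\hat{\mathcal R}_n(f)\big|.$$
   Context: Setting: a multi-period inventory system with nonperishable product, zero lead time and backordering; the inventory state at an ordering time is a scalar $z\in\mathbb R$. Demand is $D=f^D(\bm X)+\epsilon$ with feature $\bm X\in\mathbb R^p$, where $(\bm X_t,\epsilon_t)$ are i.i.d. over time and $D\in[0,\bar D]$. Because $z$ is determined by past demands, $z$ is independent of the current $(\bm X,D)$. A policy is a map $f:\mathbb R^p\times\mathbb R\to\mathbb R$ (negative values allowed) giving the order quantity. For unit costs $b,h>0$, the loss is $\ell(f(\bm x,z),d)=b\,[d-f(\bm x,z)-z]^++h\,[f(\bm x,z)+z-d]^+$, the population risk is $\mathcal R(f)=\mathbb E_{\bm X,z,D}[\ell(f(\bm X,z),D)]$, and $g^*$ is a minimizer of $\mathcal R$ over all measurable functions. Given $n$ samples $\{(\bm x_i,z_i,d_i)\}_{i=1}^n$, the empirical risk is $\hat{\mathcal R}_n(f)=\frac1n\sum_{i=1}^n\ell(f(\bm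 x_i,z_i),d_i)$. The hypothesis class $\mathcal F$ of functions $\mathbb R^p\times\mathbb R\to\mathbb R$ satisfies: $\|f\|_\infty\le Q$ for all $f\in\mathcal F$ and some constant $Q>0$; $\mathcal F$ is closed under pointwise convergence (hence compact); and (fix-and-shift closure) for every $f\in\mathcal F$ and $c\in\mathbb R$, the function $f_c(\bm x,z)=f(\bm x,c)+c-z$ belongs to $\mathcal F$. Define $\mathcal V=\{v:\mathbb R^p\to\mathbb R\mid \exists f\in\mathcal F \text{ with } f(\bm x,z)=v(\bm x)-z\ \forall(\bm x,z)\}$ and the constrained class $\mathcal F'=\{f:\mathbb R^p\times\mathbb R\to\mathbb R\mid f(\bm x,z)=v(\bm x)-z\ \forall(\bm x,z),\ v\in\mathcal V\}$. *)

(* Defs.v *)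
From HB Require Import structures.
From mathcomp Require Import all_boot all_order all_algebra.
From mathcomp Require Import all_classical all_reals all_analysis.
Set Implicit Arguments. Unset Strict Implicit. Unset Printing Implicit Defensive.
Import Order.TTheory GRing.Theory Num.Theory.
Local Open Scope classical_set_scope.
Local Open Scope ring_scope.

(* Newsvendor-type loss  l(q, d) = b [d - q - z]^+ + h [q + z - d]^+
   where q = f(x,z) is the order quantity and z the inventory state. *)
Definition loss (R : realType) (b h q z d : R) : R :=
  b * Num.max (d - q - z) 0 + h * Num.max (q + z - d) 0.

(* PXD is the joint law of (X, D) on X * R, Pz the law of
   the inventory state z on R; independence of z and (X, D) is encoded by
   taking the joint law of ((X, D), z) to be the product measure PXD \x Pz. *)
Definition risk (R : realType) (dX : measure_display) (X : measurableType dX)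
  (PXD : probability (X * R)%type R) (Pz : probability R R) (b h : R)
  (f : X * R -> R) : \bar R :=
  (\int[(PXD \x Pz)%E]_w (loss b h (f (w.1.1, w.2)) w.2 w.1.2)%:E)%E.

Definition emp_risk (R : realType) (X : Type) (b h : R) (n : nat)
  (xs : 'I_n -> X) (zs ds : 'I_n -> R) (f : X * R -> R) : R :=
  n%:R^-1 * \sum_(i < n) loss b h (f (xs i, zs i)) (zs i) (ds i).

Definition Vset (R : realType) (X : Type) (F : set (X * R -> R)) : set (X -> R) :=
  [set v | exists2 f, F f & forall x z, f (x, z) = v x - z].

Definition Fprime (R : realType) (X : Type) (F : set (X * R -> R)) : set (X * R -> R) :=
  [set f | exists2 v, Vset F v & forall x z, f (x, z) = v x - z].

(* Main.v *)
Require Import Defs.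
From HB Require Import structures.
From mathcomp Require Import all_boot all_order all_algebra.
From mathcomp Require Import all_classical all_reals all_analysis.
Import Order.TTheory GRing.Theory Num.Theory.
Import numFieldNormedType.Exports.
From mathcomp Require Import measurable_realfun ring lra.
Local Open Scope classical_set_scope.
Local Open Scope ring_scope.

Section Aux.
Variables (R : realType) (dX : measure_display) (X : measurableType dX)
  (PXD : probability (X * R)%type R) (Pz : probability R R) (b h : R)
  (hb : 0 < b) (hh : 0 < h).

Definition Gf (f : X * R -> R) : (X * R) * R -> \bar R :=
  fun w => (loss b h (f (w.1.1, w.2)) w.2 w.1.2)%:E.

Lemma loss_ge0 q z d : 0 <= loss b h q z d.
Proof.
rewrite /loss; apply: addr_ge0; apply: mulr_ge0;
  by [exact: ltW | rewrite le_max lexx orbT].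
Qed.

Lemma Gf_ge0 f w : (0 <= Gf f w)%E.
Proof. by rewrite lee_fin loss_ge0. Qed.

Lemma Gf_meas f : measurable_fun setT f -> measurable_fun [set: (X * R) * R] (Gf f : (X * R) * R -> \bar R).
Proof.
move=> mf; apply/measurable_EFinP; rewrite /loss.
have m1 : measurable_fun setT (fun w : (X * R) * R => f (w.1.1, w.2)).
  apply: measurableT_comp => //; apply: measurable_fun_pair => //.
  exact: measurableT_comp.
have m2 : measurable_fun setT (fun w : (X * R) * R => w.1.2).
  exact: measurableT_comp.
have m3 : measurable_fun setT (fun w : (X * R) * R => w.2) by exact: measurable_snd.
apply: measurable_funD; apply: measurable_funM; try exact: measurable_cst;
  apply: measurable_maxr; try exact: measurable_cst.
- by apply: measurable_funB => //; apply: measurable_funB.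
- by apply: measurable_funB => //; apply: measurable_funD.
Qed.

Lemma key (f : X * R -> R) : measurable_fun setT f -> forall e : R, 0 < e ->
  exists c : R, (risk PXD Pz b h (fun w => (f (w.1, c) + c - w.2)%R)
             <= risk PXD Pz b h f + e%:E)%E.
Proof.
move=> mf e e0.
pose phi := fubini_G PXD (Gf f).
have mphi : measurable_fun setT phi.
  apply: measurable_fun_fubini_tonelli_G; [exact: Gf_meas | exact: Gf_ge0].
have rf : risk PXD Pz b h f = (\int[Pz]_y phi y)%E.
  rewrite /risk; have := fubini_tonelli2 (Gf f) (Gf_meas f mf) (Gf_ge0 f).
  by move=> ->.
have rc c : risk PXD Pz b h (fun w => (f (w.1, c) + c - w.2)%R) = phi c.
  rewrite /risk.
  transitivity (\int[(PXD \x Pz)%E]_w Gf f (w.1, c))%E.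
    apply: eq_integral => w _; rewrite /Gf /loss /=; congr (_%:E).
    congr (b * Num.max _ 0 + h * Num.max _ 0); ring.
  have mc : measurable_fun setT (fun w : (X * R) * R => Gf f (w.1, c)).
    apply: measurableT_comp; first exact: Gf_meas.
    apply: measurable_fun_pair => //; exact: measurable_cst.
  rewrite (fubini_tonelli2 _ mc (fun w => Gf_ge0 f (w.1, c))).
  transitivity (\int[Pz]_y (cst (phi c)) y)%E; first by [].
  rewrite integral_cst // -[RHS]mule1; congr (_ * _)%E; exact: probability_setT.
have [[c hc]|] := pselect (exists c, (phi c <= \int[Pz]_y phi y + e%:E)%E).
  by exists c; rewrite rc rf.
move/forallNP => H.
have lt c : (\int[Pz]_y phi y + e%:E < phi c)%E.
  by move: (H c) => /negP; rewrite -ltNge.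
have I0 : (0 <= \int[Pz]_y phi y)%E.
  by apply: integral_ge0 => y _; apply: integral_ge0 => x _; exact: Gf_ge0.
have le : ((\int[Pz]_y phi y + e%:E) * 1 <= \int[Pz]_y phi y)%E.
  rewrite -(probability_setT Pz) -integral_cst //.
  apply: ge0_le_integral => //.
  - by move=> y _; apply: adde_ge0 => //; rewrite lee_fin ltW.
  - by move=> y _; apply: ltW; exact: lt.
move: (lt (0 : R)) le I0; case: (\int[Pz]_y phi y)%E => [r| |] //=.
  move=> _; rewrite mule1 -EFinD lee_fin => hle _.
  by move: hle; rewrite gerDl leNgt e0.
by rewrite ltNge leey.
Qed.

End Aux.

Theorem proposition2
  (R : realType) (dX : measure_display) (X : measurableType dX)
  (PXD : probability (X * R)%type R) (Pz : probability R R)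
  (Dbar : R) (hD : PXD [set w | 0 <= w.2 <= Dbar] = 1%E)
  (b h : R) (hb : 0 < b) (hh : 0 < h)
  (gs : X * R -> R) (gs_meas : measurable_fun setT gs)
  (gs_min : forall g : X * R -> R, measurable_fun setT g ->
     (risk PXD Pz b h gs <= risk PXD Pz b h g)%E)
  (F : set (X * R -> R)) (Q : R) (hQ : 0 < Q)
  (F_meas : forall f, F f -> measurable_fun setT f)
  (F_bdd : forall f, F f ->
     {ae (PXD \x Pz)%E, forall w, `|f (w.1.1, w.2)| <= Q})
  (F_closed : forall (u : nat -> X * R -> R) (g : X * R -> R),
     (forall k, F (u k)) -> (forall w, (fun k => u k w) @ \oo --> g w) -> F g)
  (F_shift : forall f c, F f -> F (fun w => f (w.1, c) + c - w.2))
  (n : nat) (xs : 'I_n -> X) (zs ds : 'I_n -> R) :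
  ereal_inf [set (risk PXD Pz b h f - risk PXD Pz b h gs)%E | f in Fprime F]
    = ereal_inf [set (risk PXD Pz b h f - risk PXD Pz b h gs)%E | f in F]
  /\
  (ereal_sup [set `|risk PXD Pz b h f - (emp_risk b h xs zs ds f)%:E|%E
                 | f in Fprime F]
   <= ereal_sup [set `|risk PXD Pz b h f - (emp_risk b h xs zs ds f)%:E|%E
                 | f in F])%E.
Proof.
have Fsub : Fprime F `<=` F.
  move=> f [v [f' Ff' hf'] hf].
  have -> : f = f' by apply/funext => -[x z]; rewrite hf hf'.
  exact: Ff'.
have inF' f c : F f -> Fprime F (fun w => f (w.1, c) + c - w.2).
  move=> Ff; exists (fun x => f (x, c) + c) => //.
  by exists (fun w => f (w.1, c) + c - w.2) => //; exact: F_shift.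
split; last by apply: ereal_sup_le; apply: image_subset.
apply: le_anti; apply/andP; split; last first.
  by apply: ereal_inf_le_tmp; apply: image_subset.
apply: le_ereal_inf_tmp => _ [f Ff <-].
have G0 : (0 <= risk PXD Pz b h gs)%E.
  by apply: integral_ge0 => w _; rewrite lee_fin; exact: loss_ge0.
move: G0; case: (risk PXD Pz b h gs) => [g| |] // _.
  apply/lee_addgt0Pr => e e0.
  have [c hc] := @key _ _ _ PXD Pz b h hb hh f (F_meas f Ff) e e0.
  apply: ge_ereal_inf.
  exists (risk PXD Pz b h (fun w => (f (w.1, c) + c - w.2)%R) - g%:E)%E.
    by exists (fun w => f (w.1, c) + c - w.2) => //; exact: inF'.
  by rewrite [X in (_ <= X)%E]addeAC; exact: (leeB hc (lexx _)).
apply: ge_ereal_inf.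
exists (risk PXD Pz b h (fun w => (f (w.1, 0) + 0 - w.2)%R) - +oo)%E.
  by exists (fun w => f (w.1, 0) + 0 - w.2) => //; exact: inF'.
by rewrite addeNy leNye.
Qed.
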